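(* Let $1\le k\le n$. For every state $q\in S_k$, there is a wait-free implementation of a consensus object for $k$ processes from one token object $T_q$ (the ERC20 token object initialized in state $q$) together with atomic read/write registers. Consequently $\mathcal{CN}(T_{S_k})\ge k$.
   Context: Asynchronous shared-memory model with crash failures; processes are sequential and communicate through shared objects; an implementation is wait-free if every operation invoked by a correct process terminates regardless of crashes of other processes. A consensus object offers a single-shot operation $\mathrm{propose}(v)$ returning a decided value; it must satisfy termination (wait-freedom), validity (the decided value was proposed by some process) and agreement (all processes decide the same value). The consensus number $\mathcal{CN}(O)$ of an object type $O$ is the largest $m$ such that consensus among $m$ processes can be wait-free implemented from atomic registers and objects of type $O$ (infinite if there is no largest). For a set of states $Q'$, $T_{Q'}$ denotes the token object initialized in some state of $Q'$; $\mathcal{CN}(T_{Q'})\ge k$ means that from any such initial state consensus among $k$ processes can be implemented. ERC20 token object. There are $n$ processes $\Pi=\{p_1,\dots,p_n\}$ and $n$ accounts $\mathcal A=\{a_1,\dots,a_n\}$, with owner bijection $\omega(a_i)=p_i$; $a_p$ denotes the account owned by $p$. States are pairs $q=(\beta,\alpha)$ with balances $\beta:\mathcal A\to\mathbb N$ and allowances $\alpha:\mathcal A\times\Pi\to\mathbb N$. Operations invoked by process $p$ (sequential specification): $\mathrm{transfer}(a_d,v)$: if $\beta(a_p)\ge v$, move $v$ from $a_p$ to $a_d$ and return true, else leave the state unchanged and return false; $\mathrm{approve}(\bar p,v)$: set $\alpha(a_p,\bar p)=v$ (all else unchanged), return true; $\mathrm{transferFrom}(a_s,a_d,v)$: if $\beta(a_s)\ge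 v$ and $\alpha(a_s,p)\ge v$, decrease $\beta(a_s)$ and $\alpha(a_s,p)$ by $v$, increase $\beta(a_d)$ by $v$, return true, else leave the state unchanged and return false; $\mathrm{balanceOf}(a)$ returns $\beta(a)$; $\mathrm{totalSupply}$ returns $\sum_a\beta(a)$; $\mathrm{allowances}(a,\bar p)$ returns $\alpha(a,\bar p)$ (read-only). $T_q$ is this object initialized in state $q$. Enabled spenders: for $q=(\beta,\alpha)$ and $a\in\mathcal A$, $\sigma_q(a)=\{p\in\Pi: p=\omega(a)\ \lor\ \alpha(a,p)>0\}$, with the convention that if $\beta(a)=0$ then $\sigma_q(a)=\{\omega(a)\}$. Predicate $\mathrm{UT}(a,q)$ holds iff $\beta(a)>0$ and (either $|\sigma_q(a)|\le 2$, or for all $p_i,p_j\in\sigma_q(a)\setminus\{\omega(a)\}$: $\alpha(a,p_i)+\alpha(a,p_j)>\beta(a)$). The set of $k$-synchronization states is $S_k=\{q: \exists a\in\mathcal A,\ |\sigma_q(a)|=k \land \mathrm{UT}(a,q)\}$. *)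

(* Defs.v *)
From mathcomp Require Import all_boot.
Set Implicit Arguments.
Unset Strict Implicit.
Unset Printing Implicit Defensive.

(* ERC20 token object with n processes p_0..p_{n-1} and n accounts     *)
(* a_0..a_{n-1}; both indexed by 'I_n, with owner omega(a_i) = p_i.     *)

Record tstate (n : nat) := TState {
  bal : 'I_n -> nat;
  alw : 'I_n -> 'I_n -> nat
}.

Inductive tok_op (n : nat) :=
| Transfer of 'I_n & nat
| Approve of 'I_n & nat
| TransferFrom of 'I_n & 'I_n & nat
| BalanceOf of 'I_n
| TotalSupply
| Allowance of 'I_n & 'I_n.

Inductive tok_resp := RBool of bool | RNat of nat.

(* move v units from account s to account d (correct also when s = d,
   provided v <= b s) *)
Definition move n (b : 'I_n -> nat) (s d : 'I_n) (v : nat) : 'I_n -> nat :=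
  fun x => b x - (if x == s then v else 0) + (if x == d then v else 0).

Definition tok_apply n (p : 'I_n) (o : tok_op n) (q : tstate n)
  : tstate n * tok_resp :=
  match o with
  | Transfer d v =>
      if v <= bal q p then (TState (move (bal q) p d v) (alw q), RBool true)
      else (q, RBool false)
  | Approve pb v =>
      (TState (bal q) (fun a p' => if (a == p) && (p' == pb) then v
                                   else alw q a p'), RBool true)
  | TransferFrom s d v =>
      if (v <= bal q s) && (v <= alw q s p) then
        (TState (move (bal q) s d v)
                (fun a p' => if (a == s) && (p' == p) then alw q a p' - v
                             else alw q a p'), RBool true)
      else (q, RBool false)
  | BalanceOf a => (q, RNat (bal q a))
  | TotalSupply => (q, RNat (\sum_(a < n) bal q a))
  | Allowance a pb => (q, RNat (alw q a pb))
  end.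

(* Enabled spenders sigma_q(a) (owner of account a is process a). *)
Definition sigma n (q : tstate n) (a : 'I_n) : {set 'I_n} :=
  if bal q a == 0 then [set a]
  else [set p | (p == a) || (0 < alw q a p)].

Definition UT n (a : 'I_n) (q : tstate n) : bool :=
  (0 < bal q a) &&
  ((#|sigma q a| <= 2) ||
   [forall pi in sigma q a :\ a, forall pj in sigma q a :\ a,
      bal q a < alw q a pi + alw q a pj]).

Definition in_Sk n (k : nat) (q : tstate n) : bool :=
  [exists a : 'I_n, (#|sigma q a| == k) && UT a q].

(* Each consensus process i acts on the token as process ident i.      *)

Inductive action (n : nat) (R : Type) :=
| Decide of nat
| TokInv of tok_op n
| RegRead of nat
| RegWrite of nat & R.

Inductive response (R : Type) := TokResp of tok_resp | RegVal of R | Ack.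

Record protocol (n k : nat) (L R : Type) := Protocol {
  ident : 'I_k -> 'I_n;
  reg0 : R;
  init : 'I_k -> nat -> L;
  act : L -> action n R;
  trans : L -> response R -> L
}.

Record config (n k : nat) (L R : Type) := Config {
  locs : 'I_k -> L;
  tok : tstate n;
  regs : nat -> R
}.

Definition upd (k : nat) (L : Type) (f : 'I_k -> L) (i : 'I_k) (y : L) :=
  fun j => if j == i then y else f j.

Definition step n k L R (P : protocol n k L R) (i : 'I_k)
  (c : config n k L R) : config n k L R :=
  let l := locs c i in
  match act P l with
  | Decide _ => c
  | TokInv o =>
      let qr := tok_apply (ident P i) o (tok c) in
      Config (upd (locs c) i (trans P l (TokResp R qr.2))) qr.1 (regs c)
  | RegRead r =>
      Config (upd (locs c) i (trans P l (RegVal (regs c r)))) (tok c) (regs c)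
  | RegWrite r x =>
      Config (upd (locs c) i (trans P l (Ack R))) (tok c)
             (fun r' => if r' == r then x else regs c r')
  end.

(* Execution under schedule s (s t = process taking step t); processes
   that appear only finitely often in s are the crashed ones. *)
Fixpoint exec n k L R (P : protocol n k L R) (q : tstate n)
  (inp : 'I_k -> nat) (s : nat -> 'I_k) (t : nat) : config n k L R :=
  match t with
  | 0 => Config (fun i => init P i (inp i)) q (fun _ => reg0 P)
  | t'.+1 => step P (s t') (exec P q inp s t')
  end.

Definition decided n k L R (P : protocol n k L R) (c : config n k L R)
  (i : 'I_k) (v : nat) : Prop :=
  act P (locs c i) = Decide n R v.

Definition wf_consensus n k L R (q : tstate n) (P : protocol n k L R) : Prop :=
  injective (ident P) /\
  forall (inp : 'I_k -> nat) (s : nat -> 'I_k),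
    (forall i j t t' v w,
        decided P (exec P q inp s t) i v ->
        decided P (exec P q inp s t') j w -> v = w) /\
    (forall i t v, decided P (exec P q inp s t) i v -> exists j, v = inp j) /\
    (forall i, (forall t, exists2 t', t <= t' & s t' = i) ->
       exists t v, decided P (exec P q inp s t) i v).

Definition consensus_implementable n (k : nat) (q : tstate n) : Prop :=
  exists (L R : Type) (P : protocol n k L R), wf_consensus q P.

(* Main.v *)
Require Import Defs.
From mathcomp Require Import all_boot zify.
Set Implicit Arguments.
Unset Strict Implicit.
Unset Printing Implicit Defensive.

Inductive lst (n : nat) :=
  S0 of 'I_n & nat | S1 of 'I_n | S2 of seq 'I_n | S3 of 'I_n | S4 of nat.

Definition dest n (a : 'I_n) : 'I_n := odflt a [pick x | x != a].

Definition opof n (q : tstate n) (a p : 'I_n) : tok_op n :=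
  if p == a then Transfer (dest a) (bal q a)
  else TransferFrom a (dest a) (minn (alw q a p) (bal q a)).

Definition qs n (q : tstate n) (a p : 'I_n) := (tok_apply p (opof q a p) q).1.

Definition scan n (q : tstate n) (a : 'I_n) (l : seq 'I_n) (T : tstate n) : 'I_n :=
  foldr (fun p r => if alw T a p < alw q a p then p else r) a l.

Lemma dest_neq n (a p : 'I_n) : p != a -> dest a != a.
Proof.
move=> hp; rewrite /dest; case: pickP => [x hx|/(_ p)] //=; by rewrite hp.
Qed.

Lemma scan_none n (q : tstate n) a l T :
  (forall x, alw T a x = alw q a x) -> scan q a l T = a.
Proof. move=> h; elim: l => //= p l ->; by rewrite h ltnn. Qed.

Lemma scan_one n (q : tstate n) a l T p : p \in l ->
  (forall x, (alw T a x < alw q a x) = (x == p)) -> scan q a l T = p.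
Proof.
move=> hp h; elim: l hp => //= x l IH; rewrite in_cons h.
by case: (eqVneq x p) => [->|ne] /=.
Qed.

Lemma T3 n (q : tstate n) a p : 0 < bal q a ->
  (p != a -> 0 < alw q a p) -> scan q a (enum 'I_n) (qs q a p) = p.
Proof.
move=> hb hpos; rewrite /qs /opof.
case: eqP => [->|/eqP pa].
  by rewrite /= leqnn /=; apply: scan_none.
rewrite /= geq_minl geq_minr /=.
apply: scan_one; first by rewrite mem_enum.
move=> x /=; have ha : (a == a) = true by apply/eqP.
rewrite ha /=; case: (eqVneq x p) => [->|ne] /=; last by rewrite ltnn.
have := hpos pa; lia.
Qed.

Lemma opof_a n (q : tstate n) a : opof q a a = Transfer (dest a) (bal q a).
Proof. by rewrite /opof eqxx. Qed.
Lemma opof_na n (q : tstate n) a p : p != a ->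
  opof q a p = TransferFrom a (dest a) (minn (alw q a p) (bal q a)).
Proof. by move=> h; rewrite /opof (negbTE h). Qed.

Lemma T2 n (q : tstate n) a p p' : 0 < bal q a ->
  (p != a -> 0 < alw q a p) -> (p' != a -> 0 < alw q a p') -> p != p' ->
  (p != a -> p' != a -> bal q a < alw q a p + alw q a p') ->
  (tok_apply p' (opof q a p') (qs q a p)).1 = qs q a p.
Proof.
move=> hb h1 h2 hne h12.
have hd : dest a != a.
  case: (eqVneq p a) => [ea|]; last exact: dest_neq.
  by apply: (@dest_neq _ _ p'); rewrite -ea eq_sym.
have ha : (a == a) = true by apply/eqP.
have hda : (a == dest a) = false by apply/negbTE; rewrite eq_sym.
rewrite /qs.
case: (eqVneq p a) => [ea|pa].
  subst p; have hp' : p' != a by rewrite eq_sym.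
  have := h2 hp'.
  rewrite opof_a (opof_na _ hp') /= leqnn /=.
  move=> h; rewrite {1}/move ha hda subnn /=.
  have -> : (minn (alw q a p') (bal q a) <= 0) = false by lia.
  done.
rewrite (opof_na _ pa) /= geq_minl geq_minr /=.
case: (eqVneq p' a) => [ea|pa'].
  subst p'; rewrite opof_a /= /move ha hda /=.
  have := h1 pa.
  have -> : (bal q a <= bal q a - minn (alw q a p) (bal q a) + 0) = false by lia.
  done.
rewrite (opof_na _ pa') /= {1}/move ha hda /=.
have := h12 pa pa'; have := h1 pa; have := h2 pa'.
move=> x1 x2 x3.
have -> : (minn (alw q a p') (bal q a) <= bal q a - minn (alw q a p) (bal q a) + 0) = false by lia.
done.
Qed.

Definition pact n (q : tstate n) (a : 'I_n) (l : lst n) : action n nat :=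
  match l with
  | S0 p x => RegWrite n (nat_of_ord p) x
  | S1 p => TokInv nat (opof q a p)
  | S2 [::] => RegRead n nat (nat_of_ord a)
  | S2 (p :: _) => TokInv nat (Allowance a p)
  | S3 p => RegRead n nat (nat_of_ord p)
  | S4 x => Decide n nat x
  end.

Definition ptrans n (q : tstate n) (a : 'I_n) (l : lst n) (r : response nat) : lst n :=
  match l with
  | S0 p _ => S1 p
  | S1 _ => S2 (enum 'I_n)
  | S2 [::] => if r is RegVal x then S4 n x else S4 n 0
  | S2 (p :: rs) =>
      if r is TokResp (RNat m) then (if m < alw q a p then S3 p else S2 rs)
      else S2 rs
  | S3 _ => if r is RegVal x then S4 n x else S4 n 0
  | S4 x => S4 n x
  end.

Definition proto n k (q : tstate n) (a : 'I_n) (id : 'I_k -> 'I_n)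
  : protocol n k (lst n) nat :=
  @Protocol n k (lst n) nat id 0 (fun i x => S0 (id i) x) (pact q a) (ptrans q a).

Definition tokW n k (q : tstate n) a (id : 'I_k -> 'I_n) (W : option 'I_k) :=
  if W is Some w then qs q a (id w) else q.

Definition notL0 n (l : lst n) := if l is S0 _ _ then false else true.
Definition notL01 n (l : lst n) :=
  match l with S0 _ _ | S1 _ => false | _ => true end.

Definition LocInv n k (q : tstate n) a (id : 'I_k -> 'I_n) (inp : 'I_k -> nat)
  (W : option 'I_k) (T : tstate n) (l : lst n) (i : 'I_k) : Prop :=
  match l with
  | S0 p x => p = id i /\ x = inp i
  | S1 p => p = id i
  | S2 rs => exists2 w, W = Some w & scan q a rs T = id w
  | S3 p => exists2 w, W = Some w & p = id w
  | S4 x => exists2 w, W = Some w & x = inp w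
  end.

Definition Inv n k (q : tstate n) a (id : 'I_k -> 'I_n) (inp : 'I_k -> nat)
  (c : config n k (lst n) nat) (W : option 'I_k) : Prop :=
  [/\ tok c = tokW q a id W,
      (forall j, LocInv q a id inp W (tok c) (locs c j) j),
      (forall w, W = Some w -> notL01 (locs c w)) &
      (forall j, notL0 (locs c j) -> regs c (id j) = inp j)].

Lemma upd_same k L (f : 'I_k -> L) i y : upd f i y i = y.
Proof. by rewrite /upd eqxx. Qed.
Lemma upd_other k L (f : 'I_k -> L) i y j : j != i -> upd f i y j = f j.
Proof. by move=> h; rewrite /upd (negbTE h). Qed.

Lemma notL01_0 n (l : lst n) : notL01 l -> notL0 l.
Proof. by case: l. Qed.

Lemma inv_local n k (q : tstate n) a (id : 'I_k -> 'I_n) inp c W i l' :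
  Inv q a id inp c W -> notL0 (locs c i) -> notL01 l' ->
  LocInv q a id inp W (tok c) l' i ->
  Inv q a id inp (Config (upd (locs c) i l') (tok c) (regs c)) W.
Proof.
move=> [ht hl hn hr] h0 h1 h2; split => //=.
- move=> j; case: (eqVneq j i) => [->|ne]; first by rewrite upd_same.
  rewrite upd_other //; exact: hl.
- move=> w hw; case: (eqVneq w i) => [->|ne]; first by rewrite upd_same.
  rewrite upd_other //; exact: hn.
- move=> j; case: (eqVneq j i) => [->|ne] h; first exact: hr.
  by move: h; rewrite upd_other //; apply: hr.
Qed.

Lemma inv_step n k (q : tstate n) a (id : 'I_k -> 'I_n) inp
  (hb : 0 < bal q a) (hinj : injective id)
  (hpos : forall i, id i != a -> 0 < alw q a (id i))
  (hpair : forall i j, i != j -> id i != a -> id j != a ->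
           bal q a < alw q a (id i) + alw q a (id j))
  c W i : Inv q a id inp c W -> exists W', Inv q a id inp (step (proto q a id) i c) W'.
Proof.
move=> [ht hl hn hr]; rewrite /step /=.
have hli := hl i.
case E: (locs c i) => [p x|p|[|p rs]|p|x] in hli *; rewrite /=.
-
  case: hli => hp hx; exists W; split => //=.
  + move=> j; case: (eqVneq j i) => [->|ne]; first by rewrite upd_same.
    rewrite upd_other //; exact: hl.
  + move=> w hw; have := hn w hw; case: (eqVneq w i) => [->|ne]; first by rewrite E.
    by rewrite upd_other.
  + move=> j; case: (eqVneq j i) => [->|ne] h; first by rewrite hp eqxx.
    rewrite hp (inj_eq val_inj) (inj_eq hinj) (negbTE ne); apply: hr.
    by move: h; rewrite upd_other.
-
  have hri : regs c (id i) = inp i by apply: hr; rewrite E.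
  clear hli; have hli : p = id i by have := hl i; rewrite E.
  case: W ht hl hn => [w|] ht hl hn.
  + have wi : w != i.
      by apply/eqP => ewi; have := hn w erefl; rewrite ewi E.
    have htok : (tok_apply (id i) (opof q a p) (tok c)).1 = tok c.
      rewrite ht hli /=; apply: T2 => //; try exact: hpos.
      by rewrite (inj_eq hinj).
      exact: hpair.
    exists (Some w); split => //=.
    * by rewrite htok.
    * move=> j; rewrite htok; case: (eqVneq j i) => [->|ne].
        by rewrite upd_same /=; exists w => //; rewrite ht /= T3 //; exact: hpos.
      rewrite upd_other //; exact: hl.
    * move=> w' [<-]; rewrite upd_other //; exact: hn.
    * move=> j; case: (eqVneq j i) => [->|ne] h //.
      by move: h; rewrite upd_other //; apply: hr.
  + exists (Some i); split => //=.
    * by rewrite ht hli.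
    * move=> j; case: (eqVneq j i) => [->|ne].
        by rewrite upd_same /=; exists i => //; rewrite ht hli T3 //; exact: hpos.
      rewrite upd_other //; have := hl j.
      by case: (locs c j) => //= [rs|p'|x'] [w].
    * by move=> w' [<-]; rewrite upd_same.
    * move=> j; case: (eqVneq j i) => [->|ne] h //.
      by move: h; rewrite upd_other //; apply: hr.
-
  have hI : Inv q a id inp c W by split.
  apply: (ex_intro _ W); apply: inv_local => //; first by rewrite E.
  case: hli => w hw /= hwa; exists w => //; rewrite hwa.
  by apply: hr; apply: notL01_0; apply: hn.
-
  have hI : Inv q a id inp c W by split.
  apply: (ex_intro _ W); apply: inv_local => //; first by rewrite E.
    by case: ifP.
  case: hli => w hw /=; case: ifP => _ hs; exists w => //.
-
  have hI : Inv q a id inp c W by split.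
  apply: (ex_intro _ W); apply: inv_local => //; first by rewrite E.
  case: hli => w hw /= hwa; exists w => //; rewrite hwa.
  by apply: hr; apply: notL01_0; apply: hn.
-
  by exists W; split.
Qed.

Definition pot n (l : lst n) : nat :=
  match l with
  | S0 _ _ => n + 4 | S1 _ => n + 3 | S2 rs => size rs + 2 | S3 _ => 1 | S4 _ => 0
  end.

Definition isS4 n (l : lst n) := if l is S4 _ then true else false.

Lemma pact_dec n (q : tstate n) a l v : pact q a l = Decide n nat v -> l = S4 n v.
Proof. by case: l => //= [[|p rs]|x] // [->]. Qed.

Lemma locs_step_other n k (q : tstate n) a (id : 'I_k -> 'I_n) c i j :
  j != i -> locs (step (proto q a id) j c) i = locs c i.
Proof.
move=> ne; rewrite /step /=.
by case: (pact q a (locs c j)) => //= *; rewrite upd_other // eq_sym.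
Qed.

Lemma locs_step_S4 n k (q : tstate n) a (id : 'I_k -> 'I_n) c i j v :
  locs c i = S4 n v -> locs (step (proto q a id) j c) i = S4 n v.
Proof.
move=> h; case: (eqVneq j i) => [->|ne]; last by rewrite locs_step_other.
by rewrite /step /= h.
Qed.

Lemma pot_step_self n k (q : tstate n) a (id : 'I_k -> 'I_n) c i :
  ~~ isS4 (locs c i) -> pot (locs (step (proto q a id) i c) i) < pot (locs c i).
Proof.
rewrite /step /=; case: (locs c i) => [p x|p|[|p rs]|p|x] //= _; rewrite upd_same /=.
- lia.
- rewrite size_enum_ord; lia.
- by case: (regs c a).
- by case: ifP => _ /=; lia.
- by case: (regs c p).
Qed.

Lemma pot_step_le n k (q : tstate n) a (id : 'I_k -> 'I_n) c i j :
  pot (locs (step (proto q a id) j c) i) <= pot (locs c i).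
Proof.
case: (eqVneq j i) => [->|ne]; last by rewrite locs_step_other.
case hs: (isS4 (locs c i)).
  by move: hs; case E: (locs c i) => [| | | |x] //= _; rewrite (locs_step_S4 _ _ _ _ E).
by apply: ltnW; apply: pot_step_self; rewrite hs.
Qed.

Lemma wf_proto n k (q : tstate n) a (id : 'I_k -> 'I_n)
  (hb : 0 < bal q a) (hinj : injective id)
  (hpos : forall i, id i != a -> 0 < alw q a (id i))
  (hpair : forall i j, i != j -> id i != a -> id j != a ->
           bal q a < alw q a (id i) + alw q a (id j)) :
  wf_consensus q (proto q a id).
Proof.
split => // inp s.
set P := proto q a id.
have hinv : forall t, exists W, Inv q a id inp (exec P q inp s t) W.
  elim=> [|t [W hW]] /=.
    by exists None; split => //= j; rewrite /init.
  exact: (@inv_step n k q a id inp hb hinj hpos hpair _ W (s t) hW).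
have persist : forall i v t m, locs (exec P q inp s t) i = S4 n v ->
    locs (exec P q inp s (t + m)) i = S4 n v.
  move=> i v t m h; elim: m => [|m IH]; first by rewrite addn0.
  by rewrite addnS /=; apply: locs_step_S4.
have dec4 : forall t i v, decided P (exec P q inp s t) i v ->
    locs (exec P q inp s t) i = S4 n v.
  by move=> t i v; rewrite /decided /=; apply: pact_dec.
split; [|split].
- move=> i j t t' v w /dec4 hi /dec4 hj.
  have hi' := persist _ _ _ (maxn t t' - t) hi.
  have hj' := persist _ _ _ (maxn t t' - t') hj.
  rewrite subnKC ?leq_maxl // in hi'.
  rewrite subnKC ?leq_maxr // in hj'.
  have [W [_ hl _ _]] := hinv (maxn t t').
  have := hl i; have := hl j; rewrite hi' hj' /=.
  by move=> [w1 -> ->] [w2 [->] ->].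
- move=> i t v /dec4 h.
  have [W [_ hl _ _]] := hinv t.
  by have := hl i; rewrite h /= => [[w _ ->]]; exists w.
- move=> i hinf.
  have mono : forall t m, pot (locs (exec P q inp s (t + m)) i) <=
                           pot (locs (exec P q inp s t) i).
    move=> t; elim=> [|m IH]; first by rewrite addn0.
    rewrite addnS /=; apply: leq_trans IH; exact: pot_step_le.
  suff : forall m t, pot (locs (exec P q inp s t) i) <= m ->
           exists t0 v, decided P (exec P q inp s t0) i v.
    by move/(_ _ 0 (leqnn _)).
  elim=> [|m IH] t.
    case E: (locs (exec P q inp s t) i) => [p0 x0|p0|[|p0 rs]|p0|v] /= h; try lia.
    by exists t, v; rewrite /decided E.
  move=> hp.
  case E: (isS4 (locs (exec P q inp s t) i)).
    move: E; case E': (locs (exec P q inp s t) i) => [p0 x0|p0|rs|p0|v] //= _.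
    by exists t, v; rewrite /decided E'.
  have [t' ht' hs] := hinf t.
  case E2: (isS4 (locs (exec P q inp s t') i)).
    move: E2; case E': (locs (exec P q inp s t') i) => [p0 x0|p0|rs|p0|v] //= _.
    by exists t', v; rewrite /decided E'.
  apply: (IH t'.+1) => /=; rewrite hs.
  have h1 : pot (locs (step P i (exec P q inp s t')) i) <
            pot (locs (exec P q inp s t') i) by apply: pot_step_self; rewrite E2.
  have h2 := mono t (t' - t); rewrite subnKC // in h2.
  lia.
Qed.

Theorem theorem2 (n k : nat) :
  1 <= k <= n ->
  forall q : tstate n, in_Sk k q -> consensus_implementable k q.
Proof.
move=> hk q /existsP [a /andP [/eqP Hk hUT]].
move/andP: hUT => [hb hor].
have hbn : (bal q a == 0) = false by apply/negbTE; rewrite -lt0n.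
have memS : forall p, (p \in sigma q a) = (p == a) || (0 < alw q a p).
  by move=> p; rewrite /sigma hbn inE.
pose id (i : 'I_k) : 'I_n := enum_val (cast_ord (esym Hk) i).
have idS : forall i, id i \in sigma q a by move=> i; apply: enum_valP.
have hinj : injective id.
  by move=> i j /enum_val_inj /cast_ord_inj.
have hpos : forall i, id i != a -> 0 < alw q a (id i).
  by move=> i hi; have := idS i; rewrite memS (negbTE hi).
exists (lst n), nat, (proto q a id); apply: wf_proto => //.
move=> i j ij hi hj.
case/orP: hor => [hle|hall].
  have hsub : (a |: [set id i; id j]) \subset sigma q a.
    apply/subsetP => x; rewrite !inE => /orP [|/orP []] /eqP ->; rewrite ?idS //.
    by rewrite memS eqxx.
  have h3 : #|(a |: [set id i; id j])| = 3.
    rewrite cardsU1 cards2 !inE negb_or eq_sym hi eq_sym hj (inj_eq hinj) ij.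
    done.
  have : 3 <= #|sigma q a| by rewrite -h3; exact: subset_leq_card.
  move: hle; lia.
have Hi : id i \in sigma q a :\ a by rewrite in_setD1 hi idS.
have Hj : id j \in sigma q a :\ a by rewrite in_setD1 hj idS.
by move: hall => /forallP/(_ (id i))/implyP/(_ Hi)/forallP/(_ (id j))/implyP/(_ Hj).
Qed.
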